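(* Assume the standing setting of the context. Let $(x,y)\in\Lambda$ with $y>0$, and suppose $(x,y)$ is the winner at some point $(a,b)\in\Omega$. Then \[ \frac{x_0-1}{y_0}\le\frac{x-1}{y}<\frac{x_0-1}{y_0}+n\alpha, \] so the point $\big(\frac{x-1}{y},1\big)$ lies in $\Omega$, on its top edge. Moreover, $(x,y)$ is the winner at $\big(\frac{x-1}{y},1\big)$.
   Context: Setting. Let $(X,\omega)$ be a Veech translation surface and fix a cusp of its Veech group, normalized by a matrix $C\in\mathrm{SL}_2(\mathbb{R})$ as in Kumanduri–Sanchez–Wang. Let $\Lambda\subset\mathbb{R}^2$ be the set of holonomy vectors of saddle connections of the normalized surface $C\cdot(X,\omega)$; it is a discrete set. Distinguished vector. Let $(x_0,y_0)\in\Lambda$ be the vector such that $y_0>0$ is the smallest positive $y$-component of vectors of $\Lambda$, and $x_0>0$ is the smallest positive $x$-component among vectors of $\Lambda$ with $y$-component $y_0$. In particular, $y\ge y_0$ for every $(x,y)\in\Lambda$ with $y>0$. Cusp parameters. $\alpha>0$ is the cusp width parameter and $n\in\{1,2\}$; $n=2$ exactly when the parabolic generator of the cusp has eigenvalue $-1$. Transversal. \[ \Omega=\Big\{(a,b)\in\mathbb{R}^2: 0<b\le1,\ \tfrac{x_0}{y_0}b-\tfrac1{y_0}\le a<(\tfrac{x_0}{y_0}+n\alpha)b-\tfrac1{y_0}\Big\}. \] Its top edge is identified with the interval \[ A=\Big[\tfrac{x_0-1}{y_0},\tfrac{x_0-1}{y_0}+n\alpha\Big) \] via $a\mapsto(a,1)$.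 Winners. A vector $(x,y)\in\Lambda$ is a candidate winning vector at $(a,b)$ if $y>0$ and $0<bx-ay\le1$. For vectors with positive $y$-component, $(u,v)$ has slope at most that of $(x,y)$ iff $u/v\ge x/y$. The winner at $(a,b)\in\Omega$ is the candidate with the largest value of $x/y$ (least slope); if several share it, the winner is the shortest of them. *)

(* Defs.v *)
From Stdlib Require Export Reals.
Open Scope R_scope.

Definition set2 := R -> R -> Prop.

(* Discrete (closed discrete, no accumulation point in R^2). *)
Definition discrete2 (L : set2) : Prop :=
  forall px py : R, exists eps : R, 0 < eps /\
    forall u v, L u v -> (u - px)^2 + (v - py)^2 < eps^2 -> u = px /\ v = py.

Definition distinguished (L : set2) (x0 y0 : R) : Prop :=
  L x0 y0 /\ 0 < y0 /\ 0 < x0 /\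
  (forall x y, L x y -> 0 < y -> y0 <= y) /\
  (forall x, L x y0 -> 0 < x -> x0 <= x).

Definition Omega (x0 y0 : R) (n : nat) (alpha a b : R) : Prop :=
  0 < b <= 1 /\
  x0 / y0 * b - 1 / y0 <= a < (x0 / y0 + INR n * alpha) * b - 1 / y0.

Definition candidate (L : set2) (a b x y : R) : Prop :=
  L x y /\ 0 < y /\ 0 < b * x - a * y <= 1.

Definition winner (L : set2) (a b x y : R) : Prop :=
  candidate L a b x y /\
  forall u v, candidate L a b u v ->
    u / v < x / y \/
    (u / v = x / y /\ sqrt (x^2 + y^2) <= sqrt (u^2 + v^2)).

(* Main.v *)
Require Import Defs.
From Stdlib Require Import Reals Lra Psatz.
Open Scope R_scope.

Theorem lemma3p1 (L : set2) (x0 y0 alpha : R) (n : nat)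
  (HL : discrete2 L) (Hdist : distinguished L x0 y0)
  (Halpha : 0 < alpha) (Hn : (n = 1 \/ n = 2)%nat)
  (x y a b : R) (Hxy : L x y) (Hy : 0 < y)
  (Hab : Omega x0 y0 n alpha a b) (Hwin : winner L a b x y) :
  (x0 - 1) / y0 <= (x - 1) / y < (x0 - 1) / y0 + INR n * alpha /\
  Omega x0 y0 n alpha ((x - 1) / y) 1 /\
  winner L ((x - 1) / y) 1 x y.
Proof.
  destruct Hdist as [HL0 [Hy0 [Hx0 [Hmin Hmin2]]]].
  destruct Hab as [[Hb Hb1] [Ha1 Ha2]].
  destruct Hwin as [Hcand Hbest].
  destruct Hcand as [_ [_ [Hc1 Hc2]]].
  set (NN := (INR n * alpha)).
  set (s := x / y). set (s0 := x0 / y0). set (t := (x - 1) / y).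
  set (t0 := (x0 - 1) / y0). set (m := / y). set (k := / y0).
  assert (Es : x = s * y) by (unfold s; field; lra).
  assert (Es0 : x0 = s0 * y0) by (unfold s0; field; lra).
  assert (Et : t = s - m) by (unfold t, s, m; field; lra).
  assert (Et0 : t0 = s0 - k) by (unfold t0, s0, k; field; lra).
  assert (Em : m * y = 1) by (unfold m; field; lra).
  assert (Ek : k * y0 = 1) by (unfold k; field; lra).
  assert (Hyy0 : y0 <= y) by exact (Hmin x y Hxy Hy).
  assert (Hmk : m <= k) by (unfold m, k; apply Rinv_le_contravar; lra).
  assert (Hm0 : 0 < m) by (unfold m; apply Rinv_0_lt_compat; lra).
  assert (Hk0 : 0 < k) by (unfold k; apply Rinv_0_lt_compat; lra).
  replace (x0 / y0) with s0 in Ha1, Ha2 by reflexivity.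
  replace (1 / y0) with k in Ha1, Ha2 by (unfold k; field; lra).
  assert (Hss0 : s0 <= s).
  { destruct (Rlt_or_le 0 (b * x0 - a * y0)) as [Hp | Hn0].
    - assert (Hc : candidate L a b x0 y0).
      { split; [exact HL0|]. split; [lra|]. split; [lra|].
        rewrite Es0.
        assert (a * y0 >= (s0 * b - k) * y0) by nra.
        assert ((s0 * b - k) * y0 = s0*y0*b - 1) by (rewrite <- Ek; ring).
        nra. }
      destruct (Hbest _ _ Hc) as [H | [H _]]; fold s0 s in H; lra.
    - rewrite Es in Hc1. rewrite Es0 in Hn0.
      assert (b * s > a) by nra.
      assert (b * s0 <= a) by nra.
      nra. }
  assert (Hup : b * t < b * (s0 + NN - k)).
  { fold NN in Ha2. rewrite Et. rewrite Es in Hc2.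
    assert (b * s - a <= m) by nra.
    assert ((1 - b) * m <= (1 - b) * k) by nra.
    nra. }
  assert (Htup : t < s0 + NN - k).
  { apply (Rmult_lt_reg_l b); lra. }
  assert (Hlow : t0 <= t) by lra.
  assert (Htop : t0 <= t < t0 + NN) by lra.
  split; [exact Htop|].
  split.
  { unfold Omega.
    replace (x0 / y0 * 1 - 1 / y0) with t0 by (unfold t0; field; lra).
    replace ((x0 / y0 + INR n * alpha) * 1 - 1 / y0) with (t0 + NN) by (unfold t0, NN; field; lra).
    fold t. lra. }
  split.
  { split; [exact Hxy|]. split; [exact Hy|].
    assert (x - t * y = 1) by (rewrite Et, Es; nra). lra. }
  intros u v [Luv [Hv [Hd1 Hd2]]].
  fold s.
  destruct (Rlt_or_le (u / v) s) as [Hl | Hge]; [left; exact Hl|].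
  set (w := u / v) in *.
  assert (Ew : u = w * v) by (unfold w; field; lra).
  assert (Hcuv : candidate L a b u v).
  { split; [exact Luv|]. split; [exact Hv|].
    rewrite Es in Hc1, Hc2.
    assert (Hbs : b * s > a) by nra.
    split.
    - rewrite Ew.
      assert (b * (w - s) >= 0) by (apply Rle_ge, Rmult_le_pos; lra).
      assert (b * w - a > 0) by lra.
      assert (v * (b * w - a) > 0) by (apply Rmult_gt_0_compat; lra).
      lra.
    - assert (Hd : u - t * v = v * (w - s + m)) by (rewrite Ew, Et; ring).
      assert (Hvm : v * m <= 1) by nra.
      assert (Hbt : b * t - a = (b * s * y - a * y - b) * m)
        by (rewrite Et; replace ((b * s * y - a * y - b) * m) with ((b*s - a)*(m*y) - b*m) by ring; rewrite Em; ring).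
      assert (Eq : b * u - a * v = b * (u - t * v) + v * (b * t - a)) by ring.
      rewrite Eq, Hbt.
      destruct (Rle_or_lt b (b * s * y - a * y)) as [Hcb | Hcb].
      + assert (v * ((b * s * y - a * y - b) * m) = (v*m) * (b * s * y - a * y - b)) by ring.
        nra.
      + assert (v * ((b * s * y - a * y - b) * m) = (v*m) * (b * s * y - a * y - b)) by ring.
        assert (0 < v * m) by (apply Rmult_lt_0_compat; lra).
        assert ((v*m) * (b * s * y - a * y - b) <= 0) by nra.
        assert (b * (u - t * v) <= b) by (rewrite <- (Rmult_1_r b) at 2; apply Rmult_le_compat_l; lra).
        lra. }
  destruct (Hbest _ _ Hcuv) as [H | H]; fold w s in H; [lra | right; exact H].
Qed.
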